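(* Let $p\ge 3$ be a prime. Then there exists a set of $p-1$ mutually orthogonal binary frequency squares of order $2p$.
   Context: A binary frequency square of order $n$ (with $n$ even) is an $n\times n$ array with entries in $\{0,1\}$ such that each of $0$ and $1$ appears exactly $n/2$ times in each row and in each column. Two such squares are orthogonal if, when superimposed, each of the four ordered pairs $(0,0),(0,1),(1,0),(1,1)$ appears the same number of times (namely $n^2/4$). A set of frequency squares is mutually orthogonal if every pair of distinct members is orthogonal. *)

(* Defs.v *)
From mathcomp Require Import all_boot.
Set Implicit Arguments. Unset Strict Implicit. Unset Printing Implicit Defensive.

(* A binary square of order n: entry (i,j) in {0,1}, encoded as bool (true = 1). *)
Definition bsquare (n : nat) := {ffun 'I_n * 'I_n -> bool}.

Definition is_binary_freq_square (n : nat) (S : bsquare n) : Prop :=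
  ~~ odd n /\
  (forall i : 'I_n, forall b : bool, #|[set j : 'I_n | S (i, j) == b]| = n %/ 2) /\
  (forall j : 'I_n, forall b : bool, #|[set i : 'I_n | S (i, j) == b]| = n %/ 2).

Definition orthogonal_sq (n : nat) (S T : bsquare n) : Prop :=
  forall a b : bool,
    #|[set c : 'I_n * 'I_n | (S c == a) && (T c == b)]| = n ^ 2 %/ 4.

Definition MOFS (n k : nat) (F : 'I_k -> bsquare n) : Prop :=
  injective F /\
  (forall r : 'I_k, is_binary_freq_square (F r)) /\
  (forall r s : 'I_k, r != s -> orthogonal_sq (F r) (F s)).

(* Main.v *)
Require Import Defs.
From mathcomp Require Import all_boot.
From mathcomp Require Import all_algebra.
From mathcomp Require Import ring zify.
Set Implicit Arguments. Unset Strict Implicit. Unset Printing Implicit Defensive.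
Import GRing.Theory Num.Theory.

Section Glue.
Local Open Scope ring_scope.
Definition sg (b : bool) : int := if b then 1 else -1.

Lemma card_sumz (X : finType) (P : pred X) :
  (#|[set x | P x]| : int) = \sum_(x : X) ((P x : nat) : int).
Proof.
rewrite -natz -sum1_card natr_sum big_mkcond /=.
by apply: eq_bigr => x _; rewrite inE; case: (P x).
Qed.

Lemma card_X (X : finType) : (#|X| : int) = \sum_(x : X) 1.
Proof.
rewrite -natz -sum1_card natr_sum.
by apply: eq_bigl => x; rewrite inE.
Qed.

Lemma card_half (X : finType) (g : X -> bool) (c : bool) :
  \sum_(x : X) sg (g x) = 0 -> (2 * #|[set x | g x == c]|)%N = #|X|.
Proof.
move=> h; suff : ((2 * #|[set x | g x == c]|)%N : int) = (#|X| : int) by case.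
rewrite PoszM card_sumz mulr_sumr card_X.
transitivity (\sum_(x : X) (1 + sg c * sg (g x))).
  by apply: eq_bigr => x _; case: (g x); case: c.
by rewrite big_split /= -mulr_sumr h mulr0 addr0.
Qed.

Lemma card_quarter (X : finType) (g h : X -> bool) (a b : bool) :
  \sum_(x : X) sg (g x) = 0 -> \sum_(x : X) sg (h x) = 0 ->
  \sum_(x : X) sg (g x) * sg (h x) = 0 ->
  (4 * #|[set x | (g x == a) && (h x == b)]|)%N = #|X|.
Proof.
move=> h1 h2 h3.
suff : ((4 * #|[set x | (g x == a) && (h x == b)]|)%N : int) = (#|X| : int) by case.
rewrite PoszM card_sumz mulr_sumr card_X.
transitivity (\sum_(x : X) (1 + sg a * sg (g x) + sg b * sg (h x)
                             + (sg a * sg b) * (sg (g x) * sg (h x)))).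
  by apply: eq_bigr => x _; case: (g x); case: (h x); case: a; case: b.
by rewrite !big_split /= -!mulr_sumr h1 h2 h3 !mulr0 !addr0.
Qed.

End Glue.

Section Core.
Variable p : nat.
Hypothesis hp : prime p.
Hypothesis hp3 : (3 <= p)%N.
Local Notation F := 'F_p.
Local Open Scope ring_scope.

Definition F0 (z : F) : int := if z == 0 then 0 else sg (val z < val (-z))%N.

Lemma two_ne0 : (2%:R : F) != 0.
Proof.
apply/eqP => h. have := val_Fp_nat hp 2. rewrite h /= modn_small //.
Qed.

Lemma negz_neq (z : F) : z != 0 -> -z != z.
Proof.
move=> hz; apply/eqP => h.
have : (2%:R : F) * z = 0 by rewrite mulr_natl mulr2n -{1}h addNr.
by move/eqP; rewrite mulf_eq0 (negbTE two_ne0) (negbTE hz).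
Qed.

Lemma F0N z : F0 (-z) = - F0 z.
Proof.
rewrite /F0 oppr_eq0; case: eqP => [_|/eqP hz]; first by rewrite oppr0.
rewrite opprK /sg.
case: (ltngtP (val (-z)) (val z)) => h //.
by move: (negz_neq hz); rewrite -(inj_eq val_inj) h eqxx.
Qed.

Lemma sumF0 : \sum_(z : F) F0 z = 0.
Proof.
have h : \sum_(z : F) F0 z = - \sum_(z : F) F0 z.
  rewrite {1}(reindex_inj (@oppr_inj _)) /=.
  rewrite -sumrN.
  by apply: eq_bigr => z _; rewrite F0N.
move: h; set s := \sum_(z : F) F0 z => h. lia.
Qed.


Lemma sumF0_lin (u m : F) : m != 0 -> \sum_(y : F) F0 (u + m * y) = 0.
Proof.
move=> hm; rewrite -{2}sumF0; symmetry.
apply: (reindex_inj (h := fun y => u + m * y)).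
by move=> y1 y2 /addrI /(mulfI hm).
Qed.

Lemma sum_ind0 : \sum_(z : F) ((z == 0 : nat) : int) = 1.
Proof.
rewrite (bigD1 0) //= big1 ?addr0 // => z /negbTE -> //.
Qed.

Lemma sum_ind_lin (u m : F) : m != 0 ->
  \sum_(y : F) ((u + m * y == 0 : nat) : int) = 1.
Proof.
move=> hm; apply: (etrans _ sum_ind0); symmetry.
apply: (reindex_inj (h := fun y => u + m * y)).
by move=> y1 y2 /addrI /(mulfI hm).
Qed.

Definition eta (m x : F) : bool := (val m < val (x / m))%N.
Definition cz (m : F) (b : bool) : F := if b then m * m else 0.
Definition zz (m : F) (t u : bool * F) : F := t.2 + m * u.2 + cz m u.1.
Definition V (m : F) (t u : bool * F) : bool :=
  if zz m t u == 0 then (eta m t.2) (+) t.1 (+) u.1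
  else (val (zz m t u) < val (- zz m t u))%N.

Lemma sgV m t u : sg (V m t u) =
  F0 (zz m t u) + ((zz m t u == 0 : nat) : int) * (sg (eta m t.2) * sg t.1 * sg u.1).
Proof.
case: t u => a x [b y]; rewrite /V /F0 /=.
case: eqP => _ /=; last by rewrite mul0r addr0.
rewrite add0r mul1r.
by case: (eta m x); case: a; case: b.
Qed.

Lemma sum_row_part (m c x : F) (K : int) : m != 0 ->
  \sum_(y : F) (F0 (x + m * y + c) + ((x + m * y + c == 0 : nat) : int) * K) = K.
Proof.
move=> hm; rewrite big_split /= -mulr_suml.
have e : forall y, x + m * y + c = (x + c) + m * y by move=> y; ring.
under eq_bigr do rewrite e.
under [X in _ + X * _]eq_bigr do rewrite e.
by rewrite sumF0_lin // sum_ind_lin // add0r mul1r.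
Qed.

Lemma sum_pair (G : bool * F -> int) :
  \sum_(u : bool * F) G u = \sum_(b : bool) \sum_(y : F) G (b, y).
Proof. by rewrite pair_bigA; apply: eq_bigr => -[b y]. Qed.

Lemma rowV m t : m != 0 -> \sum_(u : bool * F) sg (V m t u) = 0.
Proof.
move=> hm; rewrite sum_pair big_bool /=.
under eq_bigr do rewrite sgV /zz /=.
under [X in _ + X]eq_bigr do rewrite sgV /zz /=.
rewrite !sum_row_part //=.
rewrite /sg /=; ring.
Qed.

Lemma colV m u : m != 0 -> \sum_(t : bool * F) sg (V m t u) = 0.
Proof.
move=> hm; rewrite sum_pair big_bool /= -big_split /=.
rewrite (eq_bigr (fun x => 2%:R * F0 (x + m * u.2 + cz m u.1))); last first.
  move=> x _; rewrite !sgV /zz /= /sg /=; ring.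
rewrite -mulr_sumr.
have e : forall x, x + m * u.2 + cz m u.1 = (m * u.2 + cz m u.1) + 1 * x by move=> x; ring.
under eq_bigr do rewrite e.
by rewrite sumF0_lin ?oner_neq0 // mulr0.
Qed.


Lemma sumL3 (m k c d : F) : m != k ->
  \sum_(y : F) \sum_(x : F) F0 (x + m * y + c) * F0 (x + k * y + d) = 0.
Proof.
move=> hmk.
transitivity (\sum_(y : F) \sum_(x : F) F0 x * F0 ((x + (d - c)) + (k - m) * y)).
  apply: eq_bigr => y _.
  rewrite (reindex_inj (addIr (- (m * y + c)))) /=.
  apply: eq_bigr => x _; congr (F0 _ * F0 _); ring.
rewrite exchange_big /=.
apply: big1 => x _; rewrite -mulr_sumr sumF0_lin ?mulr0 //.
by rewrite subr_eq0 eq_sym.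
Qed.

Lemma sum2_single (G : F -> int) (P : F -> F -> bool) x0 y0 :
  (forall x y, P x y = (x == x0) && (y == y0)) ->
  \sum_(y : F) \sum_(x : F) ((P x y : nat) : int) * G x = G x0.
Proof.
move=> hP; rewrite (bigD1 y0) //=.
have -> : \sum_(y | y != y0) \sum_(x : F) ((P x y : nat) : int) * G x = 0.
  apply: big1 => y /negbTE hy; apply: big1 => x _; by rewrite hP hy andbF mul0r.
rewrite addr0 (bigD1 x0) //=.
have -> : \sum_(x | x != x0) ((P x y0 : nat) : int) * G x = 0.
  apply: big1 => x /negbTE hx; by rewrite hP hx mul0r.
by rewrite addr0 hP !eqxx mul1r.
Qed.

Lemma meet0 (m k : F) x y : m != k ->
  (x + m * y + 0 == 0) && (x + k * y + 0 == 0) = (x == 0) && (y == 0).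
Proof.
move=> hmk; apply/idP/idP.
  case/andP => /eqP h1 /eqP h2.
  have e : (m - k) * y = (x + m * y + 0) - (x + k * y + 0) by ring.
  rewrite h1 h2 subrr in e; move/eqP: e; rewrite mulf_eq0 subr_eq0 (negbTE hmk) /= => /eqP hy.
  rewrite hy mulr0 !addr0 in h1; by rewrite h1 hy !eqxx.
by case/andP => /eqP -> /eqP ->; rewrite !mulr0 !addr0 eqxx.
Qed.

Lemma meet1 (m k : F) x y : m != k ->
  (x + m * y + m * m == 0) && (x + k * y + k * k == 0) = (x == m * k) && (y == - (m + k)).
Proof.
move=> hmk; apply/idP/idP.
  case/andP => /eqP h1 /eqP h2.
  have e : (m - k) * (y + (m + k)) = (x + m * y + m * m) - (x + k * y + k * k) by ring.
  rewrite h1 h2 subrr in e; move/eqP: e; rewrite mulf_eq0 subr_eq0 (negbTE hmk) /= addr_eq0 => /eqP hy.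
  have ex : x = (x + m * y + m * m) - m * y - m * m by ring.
  rewrite h1 hy in ex.
  apply/andP; split; apply/eqP; last by [].
  rewrite ex; ring.
by case/andP => /eqP -> /eqP ->; apply/andP; split; apply/eqP; ring.
Qed.

Lemma eta0 m : eta m 0 = false.
Proof. by rewrite /eta mul0r ltn0. Qed.

Lemma eta_mk m k : m != 0 -> k != 0 -> m != k ->
  sg (eta m (m * k)) * sg (eta k (m * k)) = -1.
Proof.
move=> hm hk hmk; rewrite /eta [m * k]mulrC mulfK // mulrC mulfK //.
rewrite /sg; case: (ltngtP (val m) (val k)) => h //.
by move: hmk; rewrite -(inj_eq val_inj) h eqxx.
Qed.


Lemma indM (a b : bool) : ((a : nat) : int) * ((b : nat) : int) = ((a && b : nat) : int).
Proof. by case: a; case: b. Qed.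

Lemma orthV m k : m != 0 -> k != 0 -> m != k ->
  \sum_(t : bool * F) \sum_(u : bool * F) sg (V m t u) * sg (V k t u) = 0.
Proof.
move=> hm hk hmk.
pose E x := sg (eta m x) * sg (eta k x).
pose P1 b x y := F0 (x + m * y + cz m b) * F0 (x + k * y + cz k b).
pose P3 b x y := (((x + m * y + cz m b == 0) && (x + k * y + cz k b == 0) : nat) : int) * E x.
rewrite sum_pair big_bool /= -big_split /=.
under eq_bigr do rewrite -big_split /=.
transitivity (\sum_(x : F) \sum_(u : bool * F) 2%:R * (P1 u.1 x u.2 + P3 u.1 x u.2)).
  apply: eq_bigr => x _; apply: eq_bigr => -[b y] _.
  rewrite !sgV /zz /P1 /P3 /E /= -indM.
  case: b; rewrite /sg /=; ring.
transitivity (2%:R * \sum_(b : bool) (\sum_(y : F) \sum_(x : F) P1 b x y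
                                     + \sum_(y : F) \sum_(x : F) P3 b x y)).
  rewrite exchange_big /= sum_pair /= mulr_sumr; apply: eq_bigr => b _.
  rewrite -big_split mulr_sumr; apply: eq_bigr => y _.
  by rewrite -big_split mulr_sumr.
rewrite big_bool /= !sumL3 // !add0r.
rewrite (@sum2_single E _ (m * k) (- (m + k))); last by move=> x y; exact: meet1.
rewrite (@sum2_single E _ 0 0); last by move=> x y; exact: meet0.
by rewrite /E eta_mk // !eta0 /sg /=; ring.
Qed.


Lemma sum_prod (A B : finType) (G : A * B -> int) :
  \sum_(c : A * B) G c = \sum_(a : A) \sum_(b : B) G (a, b).
Proof. by rewrite pair_bigA; apply: eq_bigr => -[a b]. Qed.

Lemma cardT : #|{: bool * F}| = (2 * p)%N.
Proof. by rewrite card_prod card_bool card_Fp. Qed.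

Definition phi (i : 'I_(2 * p)) : bool * F := enum_val (cast_ord (esym cardT) i).
Definition psi (t : bool * F) : 'I_(2 * p) := cast_ord cardT (enum_rank t).
Lemma phiK : cancel phi psi.
Proof. by move=> i; rewrite /phi /psi enum_valK cast_ordKV. Qed.
Lemma psiK : cancel psi phi.
Proof. by move=> t; rewrite /phi /psi cast_ordK enum_rankK. Qed.

Lemma sum_phi (G : bool * F -> int) :
  \sum_(i : 'I_(2 * p)) G (phi i) = \sum_(t : bool * F) G t.
Proof.
symmetry; apply: reindex; apply: onW_bij; exact: (Bijective phiK psiK).
Qed.

Definition mr (r : 'I_p.-1) : F := (r.+1)%:R.

Lemma val_mr r : nat_of_ord (mr r) = r.+1.
Proof. rewrite /mr val_Fp_nat // modn_small //; have := ltn_ord r; lia. Qed.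

Lemma mr_neq0 r : mr r != 0.
Proof. apply/eqP => h; have := val_mr r; rewrite h /=; lia. Qed.

Lemma mr_neq r s : r != s -> mr r != mr s.
Proof.
move=> hrs; apply/eqP => h; move/eqP: hrs; apply.
apply: ord_inj; have := val_mr r; have := val_mr s; rewrite h /=; lia.
Qed.

Definition sq (r : 'I_p.-1) : bsquare (2 * p) :=
  [ffun c => V (mr r) (phi c.1) (phi c.2)].

Lemma sq_row r (i : 'I_(2 * p)) : \sum_(j : 'I_(2 * p)) sg (sq r (i, j)) = 0.
Proof.
transitivity (\sum_(u : bool * F) sg (V (mr r) (phi i) u)).
  by rewrite -sum_phi; apply: eq_bigr => j _; rewrite ffunE.
exact: rowV (mr_neq0 r).
Qed.

Lemma sq_col r (j : 'I_(2 * p)) : \sum_(i : 'I_(2 * p)) sg (sq r (i, j)) = 0.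
Proof.
transitivity (\sum_(t : bool * F) sg (V (mr r) t (phi j))).
  by rewrite -sum_phi; apply: eq_bigr => i _; rewrite ffunE.
exact: colV (mr_neq0 r).
Qed.

Lemma sq_all r : \sum_(c : 'I_(2 * p) * 'I_(2 * p)) sg (sq r c) = 0.
Proof. by rewrite sum_prod big1 // => i _; exact: sq_row. Qed.

Lemma sq_orth_sum r s : r != s ->
  \sum_(c : 'I_(2 * p) * 'I_(2 * p)) sg (sq r c) * sg (sq s c) = 0.
Proof.
move=> hrs; rewrite sum_prod.
transitivity (\sum_(t : bool * F) \sum_(u : bool * F)
                sg (V (mr r) t u) * sg (V (mr s) t u)).
  rewrite -sum_phi; apply: eq_bigr => i _.
  by rewrite -sum_phi; apply: eq_bigr => j _; rewrite !ffunE.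
exact: orthV (mr_neq0 r) (mr_neq0 s) (mr_neq hrs).
Qed.

Lemma sq_orth r s : r != s -> orthogonal_sq (sq r) (sq s).
Proof.
move=> hrs a b.
have := card_quarter a b (sq_all r) (sq_all s) (sq_orth_sum hrs).
rewrite card_prod card_ord.
have -> : ((2 * p) ^ 2 = 4 * (p * p))%N by rewrite -mulnn mulnACA.
rewrite mulKn //.
set N := #|_|; move=> h; nia.
Qed.

Lemma sq_freq r : is_binary_freq_square (sq r).
Proof.
split; first by rewrite oddM.
split.
  move=> i b; have := card_half b (sq_row r i); rewrite card_ord mulKn //.
  set N := #|_|; move=> h; lia.
move=> j b; have := card_half b (sq_col r j); rewrite card_ord mulKn //.
set N := #|_|; move=> h; lia.
Qed.

Lemma main_exists : exists G : 'I_(p.-1) -> bsquare (2 * p), MOFS G.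
Proof.
exists sq; split; last by split; [exact: sq_freq | exact: sq_orth].
move=> r s e; case: (eqVneq r s) => // hrs; exfalso.
have := sq_orth hrs true false; rewrite e.
rewrite (_ : [set c | (sq s c == true) && (sq s c == false)] = set0); last first.
  by apply/setP => c; rewrite !inE; case: (sq s c).
rewrite cards0 (_ : ((2 * p) ^ 2 = 4 * (p * p))%N); last by rewrite -mulnn mulnACA.
rewrite mulKn //; nia.
Qed.

End Core.

Theorem mainTheorem14 (p : nat) (hp : prime p) (hp3 : 3 <= p) :
  exists F : 'I_(p.-1) -> bsquare (2 * p), MOFS F.
Proof. exact: main_exists hp hp3. Qed.
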